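(* Let $K\ge 2$ be even, $a,b\ge1$ integers, $M\ge0$. For the $(K,a,b)$ coded caching problem for location-based content, $R^\star\ge \dfrac{K}{2}-\dfrac{K}{2(2a+b)}M$.
   Context: For integers $x\le y$, $[x:y]=\{x,x+1,\dots,y\}$ and $[n]=[1:n]$. For integers $c$ and $m\ge1$, $\langle c\rangle_m$ denotes the unique element of $\{1,\dots,m\}$ congruent to $c$ modulo $m$. The $(K,a,b)$ coded caching problem for location-based content: a server has $N=K(a+b)$ files $W_1,\dots,W_N$, each consisting of $B$ independent uniformly distributed bits. There are $K$ cache nodes, each storing $MB$ bits, and $K$ users, user $k$ having free access to cache node $k$ only. For $k\in[K]$ define $\mathcal D_{k,1}=[(k-1)(a+b)+1:ka+(k-1)b]$, $\mathcal D_{k,2}=[ka+(k-1)b+1:k(a+b)]$, $\mathcal D_{k,3}=\mathcal D_{\langle k+1\rangle_K,1}$, and $\mathcal D_k=\mathcal D_{k,1}\cup\mathcal D_{k,2}\cup\mathcal D_{k,3}$. A scheme consists of: placement functions $Z_k=\phi_k(W_1,\dots,W_N)\in\{0,1\}^{MB}$, chosen without knowledge of demands; for every demand vector $\mathbf d=(d_1,\dots,d_K)\in\mathcal D_1\times\cdots\times\mathcal D_K$, a transmitted message $X=\psi(\mathbf d,W_1,\dots,W_N)\in\{0,1\}^{RB}$; and decoding functions such that user $k$ recovers $W_{d_k}$ exactly from $(\mathbf d,Z_k,X)$ for every $\mathbf d$ and $k$. $R$ is the worst-case load and $R^\star$ is the infimum of $R$ over all schemes (and all $B$). *)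

(* Defs.v *)
From HB Require Import structures.
From mathcomp Require Import all_boot all_order all_algebra.
From mathcomp Require Import classical_sets reals.
Set Implicit Arguments. Unset Strict Implicit. Unset Printing Implicit Defensive.
Import Order.TTheory GRing.Theory Num.Theory.

(* File indices are 1-based naturals as in the paper: file n in [1:N].
   In Rocq, file i : 'I_N stands for W_{i+1}; user k : 'I_K stands for user k+1. *)

Definition Dk1 (a b k : nat) : pred nat :=
  fun n => ((k - 1) * (a + b) + 1 <= n) && (n <= k * a + (k - 1) * b).
Definition Dk2 (a b k : nat) : pred nat :=
  fun n => (k * a + (k - 1) * b + 1 <= n) && (n <= k * (a + b)).
(* <c>_m : the unique element of {1..m} congruent to c mod m (for c >= 1) *)
Definition modrep (m c : nat) : nat := (c - 1) %% m + 1.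
Definition Dk3 (K a b k : nat) : pred nat := Dk1 a b (modrep K (k + 1)).
Definition Dk (K a b k : nat) : pred nat :=
  fun n => [|| Dk1 a b k n, Dk2 a b k n | Dk3 K a b k n].

Definition library (K a b B : nat) := {ffun 'I_(K * (a + b)) -> {ffun 'I_B -> bool}}.
Definition demand (K a b : nat) := {ffun 'I_K -> 'I_(K * (a + b))}.

Definition admissible (K a b : nat) (d : demand K a b) : Prop :=
  forall k : 'I_K, Dk K a b k.+1 (d k).+1.

Definition has_scheme (K a b B C L : nat) : Prop :=
  exists (phi : 'I_K -> library K a b B -> {ffun 'I_C -> bool})
         (psi : demand K a b -> library K a b B -> {ffun 'I_L -> bool})
         (mu : 'I_K -> demand K a b -> {ffun 'I_C -> bool} ->
               {ffun 'I_L -> bool} -> {ffun 'I_B -> bool}),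
    forall d : demand K a b, admissible d ->
    forall (W : library K a b B) (k : 'I_K),
      mu k d (phi k W) (psi d W) = W (d k).

Local Open Scope ring_scope.
Local Open Scope classical_set_scope.

Definition achievable_loads (R : realType) (K a b : nat) (M : R) : set R :=
  [set r | exists B C L : nat, (0 < B)%N /\ (C%:R <= M * B%:R) /\
           has_scheme K a b B C L /\ r = L%:R / B%:R].

Definition Rstar (R : realType) (K a b : nat) (M : R) : R :=
  inf (achievable_loads K a b M).

(* Main.v *)
Require Import Defs.
From HB Require Import structures.
From mathcomp Require Import all_boot all_order all_algebra.
From mathcomp Require Import classical_sets reals.
From mathcomp Require Import zify.
Import Order.TTheory GRing.Theory Num.Theory.

From mathcomp Require Import ring lra.
Lemma count_bound (T U : finType) (p q B C L : nat)
  (phi : 'I_p.+1 -> T -> {ffun 'I_C -> bool})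
  (psi : 'I_q.+1 -> T -> {ffun 'I_L -> bool})
  (E : {ffun 'I_p.+1 * 'I_q.+1 -> {ffun 'I_B -> bool}} -> T)
  (dec : 'I_p.+1 -> 'I_q.+1 -> {ffun 'I_C -> bool} -> {ffun 'I_L -> bool} -> {ffun 'I_B -> bool})
  (H : forall g i j, dec i j (phi i (E g)) (psi j (E g)) = g (i, j)) :
  (B * (p.+1 * q.+1) <= C * p.+1 + L * q.+1)%N.
Proof.
pose F := fun g : {ffun 'I_p.+1 * 'I_q.+1 -> {ffun 'I_B -> bool}} =>
  (([ffun i => phi i (E g)] : {ffun 'I_p.+1 -> {ffun 'I_C -> bool}}),
   ([ffun j => psi j (E g)] : {ffun 'I_q.+1 -> {ffun 'I_L -> bool}})).
have inj : injective F.
  move=> g g' [e1 e2]; apply/ffunP => -[i j].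
  rewrite -H -(H g').
  have := congr1 (fun f : {ffun 'I_p.+1 -> {ffun 'I_C -> bool}} => f i) e1.
  have := congr1 (fun f : {ffun 'I_q.+1 -> {ffun 'I_L -> bool}} => f j) e2.
  by rewrite /= !ffunE => -> ->.
have := leq_card F inj.
rewrite card_prod !card_ffun !card_bool !card_prod !card_ord -!expnM -expnD.
by rewrite leq_exp2l.
Qed.
Lemma adm_arith (K a b k j : nat) : (1 <= a)%N -> (k < K)%N -> (j < 2*a+b)%N ->
  (~~ odd k -> k.+1 < K)%N ->
  Dk K a b k.+1 (k * (a + b) + (if odd k then 0 else j)).+1.
Proof.
move=> a1 kK jn hk.
rewrite /Dk /Dk1 /Dk2 /Dk3 /modrep subn1 /=.
case: (odd k) hk => [_|/(_ isT) hk].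
  apply/orP; left; apply/andP; split; nia.
case: (ltnP j a) => ja.
  apply/orP; left; apply/andP; split; nia.
case: (ltnP j (a+b)) => jab.
  apply/orP; right; apply/orP; left; apply/andP; split; nia.
apply/orP; right; apply/orP; right.
rewrite addn1 subn1 /= modn_small ?addn1 //.

apply/andP; split; nia.
Qed.

Lemma even_succ_lt (K k : nat) : ~~ odd K -> ~~ odd k -> (k < K)%N -> (k.+1 < K)%N.
Proof.
move=> eK ek kK; rewrite ltn_neqAle kK andbT; apply/negP=>/eqP e.
by move: eK; rewrite -e /= ek.
Qed.

Lemma scheme_bound (K a b B C L : nat) :
  (2 <= K)%N -> ~~ odd K -> (1 <= a)%N -> has_scheme K a b B C L ->
  (B * (K./2 * (2*a+b)) <= C * K./2 + L * (2*a+b))%N.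
Proof.
move=> K2 Kev a1 [phi [psi [mu Hs]]].
have eK : K = (K./2).*2 by rewrite -[LHS]odd_double_half (negbTE Kev).
have hp : (K./2).-1.+1 = K./2 by rewrite prednK //; lia.
have hq : (2*a+b).-1.+1 = (2*a+b)%N by rewrite prednK //; lia.
rewrite -hp -hq.
set p := (K./2).-1. set q := (2*a+b).-1.
have uP : forall i : 'I_p.+1, (2 * i < K)%N.
  move=> i; have := ltn_ord i; move: (nat_of_ord i) => n; lia.
pose u (i : 'I_p.+1) : 'I_K := Ordinal (uP i).
have dP : forall (j : 'I_q.+1) (k : 'I_K),
   (k * (a + b) + (if odd k then 0 else j) < K * (a + b))%N.
  move=> j k; have := ltn_ord j; move: (nat_of_ord j) => jj jn.
  have jn' : (jj < 2*a+b)%N by lia. clear jn. move: jn'.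
  have := ltn_ord k.
  case: (boolP (odd k)) => ok /= jn kK.
    nia.
  have := @even_succ_lt _ _ Kev ok jn.
  nia.
pose d (j : 'I_q.+1) : demand K a b := [ffun k => Ordinal (dP j k)].
have adm : forall j, admissible (d j).
  move=> j k; rewrite ffunE /=; apply: adm_arith => //.
    by have := ltn_ord j; move: (nat_of_ord j) => jj; rewrite hq.
  by move=> ok; apply: (@even_succ_lt _ _ Kev ok (ltn_ord k)).
pose E (g : {ffun 'I_p.+1 * 'I_q.+1 -> {ffun 'I_B -> bool}}) : library K a b B :=
  [ffun f : 'I_(K * (a + b)) =>
     g (inord (f %/ (2*(a+b))), inord (f %% (2*(a+b))))].
apply: (@count_bound (library K a b B) (library K a b B) p q B C L
   (fun i W => phi (u i) W) (fun j W => psi (d j) W) E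
   (fun i j z x => mu (u i) (d j) z x)).
move=> g i j; rewrite Hs // ffunE /= ffunE /=.
have oi : odd (2 * i) = false by rewrite oddM.
rewrite oi.
have jlt : (j < 2 * (a + b))%N by have := ltn_ord j; move: (nat_of_ord j) => jj; rewrite hq; lia.
have -> : (2 * i * (a + b) + j = i * (2 * (a + b)) + j)%N by rewrite mulnA (mulnC 2).
rewrite divnMDl; last lia.
rewrite modnMDl divn_small // modn_small // addn0.
by rewrite !inord_val.
Qed.

Local Open Scope ring_scope.

Lemma real_step (R : realType) (h n B C L : nat) (M : R) :
  (0 < B)%N -> (0 < n)%N -> C%:R <= M * B%:R ->
  (B * (h * n) <= C * h + L * n)%N ->
  (h.*2)%:R / 2 - (h.*2)%:R / (2 * n%:R) * M <= L%:R / B%:R.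
Proof.
move=> B0 n0 hC hN.
have Bp : (0 : R) < B%:R by rewrite ltr0n.
have np : (0 : R) < n%:R by rewrite ltr0n.
have hN' : (B%:R * (h%:R * n%:R) <= C%:R * h%:R + L%:R * n%:R :> R).
  by rewrite -!natrM -natrD ler_nat.
have eq1 : (h.*2)%:R / 2 - (h.*2)%:R / (2 * n%:R) * M =
           (h%:R * n%:R - h%:R * M) / n%:R :> R.
  by rewrite -muln2 natrM; field; rewrite lt0r_neq0.
rewrite eq1 ler_pdivrMr // mulrAC ler_pdivlMr //.
have h0 : (0 : R) <= h%:R by [].
have : h%:R * C%:R <= h%:R * (M * B%:R) by apply: ler_wpM2l.
nra.
Qed.

Theorem mainTheorem4 (R : realType) (K a b : nat) (M : R) :
  (2 <= K)%N -> ~~ odd K -> (1 <= a)%N -> (1 <= b)%N -> 0 <= M ->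
  K%:R / 2 - K%:R / (2 * (2 * a + b)%:R) * M <= Rstar K a b M.
Proof.
move=> K2 Kev a1 b1 M0.
apply: lb_le_inf.
  exists ((K * (a + b))%:R / 1%:R), 1%N, 0%N, (K * (a + b))%N; split => //.
  split; first by rewrite mulr1.
  split => //.
  exists (fun _ _ => [ffun _ => false]),
         (fun _ (W : library K a b 1) => [ffun i => W i ord0] : {ffun 'I_(K * (a + b)) -> bool}),
         (fun k d _ x => [ffun _ => x (d k)]).
  move=> d _ W k; apply/ffunP => t; rewrite !ffunE.
  by rewrite (ord1 t).
move=> r [B [C [L [B0 [hC [hs ->]]]]]].
have hb := @scheme_bound K a b B C L K2 Kev a1 hs.
have eK : K = (K./2).*2 by rewrite -[LHS]odd_double_half (negbTE Kev).
rewrite [in X in X <= _]eK.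
apply: real_step => //; lia.
Qed.
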